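(* Let $k$ be an infinite field, $n\ge 1$, and let $k\subset E$ be a finite Galois extension with Galois group $G_{E/k}=\mathrm{Gal}(E|k)$. Let $P\subset \mathbb{P}^n(E)$ be a set of $n+1$ distinct points which is stable under the natural action of $G_{E/k}$ (so $P$ is a $G_{E/k}$-set). Then there exists a set $Q\subset\mathbb{P}^n(E)$ of $n+1$ points, not all lying on a common hyperplane (i.e. in general linear position), which is stable under $G_{E/k}$ and isomorphic to $P$ as a $G_{E/k}$-set.
   Context: $G_{E/k}$ acts on $\mathbb{P}^n(E)$ coordinatewise. *)

(* Defs.v *)
From HB Require Import structures.
From mathcomp Require Import all_boot all_order all_algebra all_fingroup all_field.
Set Implicit Arguments. Unset Strict Implicit. Unset Printing Implicit Defensive.
Import GRing.Theory.
Local Open Scope ring_scope.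

(* Points of P^n(L) are represented by nonzero row vectors of length n+1;
   two representatives give the same point iff they are proportional. *)
Definition proj_eq (L : fieldType) (m : nat) (u v : 'rV[L]_m) : Prop :=
  exists c : L, c != 0 /\ u = c *: v.

Definition gal_act (F : fieldType) (L : splittingFieldType F)
  (s : gal_of {:L}) (m : nat) (u : 'rV[L]_m) : 'rV[L]_m :=
  map_mx (fun x => s x) u.

Definition distinct_points (L : fieldType) (m d : nat) (p : 'I_m -> 'rV[L]_d) : Prop :=
  (forall i, p i != 0) /\ (forall i j, proj_eq (p i) (p j) -> i = j).

Definition gal_stable (F : fieldType) (L : splittingFieldType F) (m d : nat)
  (p : 'I_m -> 'rV[L]_d) : Prop :=
  forall s, s \in ('Gal({:L} / 1%AS))%g ->
    forall i, exists j, proj_eq (gal_act s (p i)) (p j).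

Definition on_common_hyperplane (L : fieldType) (m d : nat) (p : 'I_m -> 'rV[L]_d) : Prop :=
  exists a : 'cV[L]_d, a != 0 /\ forall i, p i *m a = 0.

(* Main.v *)
Require Import Defs.
From HB Require Import structures.
From mathcomp Require Import all_boot all_order all_algebra all_fingroup all_field.
Set Implicit Arguments. Unset Strict Implicit. Unset Printing Implicit Defensive.
Import GRing.Theory.
Local Open Scope ring_scope.

Lemma uniq_seq_exists (F : eqType) (Finf : forall s : seq F, exists x : F, x \notin s) k :
  exists s : seq F, uniq s && (size s == k).
Proof.
elim: k => [|k [s /andP[us /eqP ss]]].
  by exists [::].
have [x xs] := Finf s; by exists (x :: s); rewrite /= xs us ss eqxx.
Qed.

Lemma exists_nonroot (F : fieldType) (L : fieldExtType F)
  (Finf : forall s : seq F, exists x : F, x \notin s)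
  (I : finType) (P : I -> {poly L}) :
  (forall i, P i != 0) -> exists t : F, forall i, (P i).[t%:A] != 0.
Proof.
move=> HP.
pose Q := \prod_i P i.
have Q0 : Q != 0 by apply/prodf_neq0 => i _; apply: HP.
suff [t Ht] : exists t : F, Q.[t%:A] != 0.
  exists t => i; move: Ht; rewrite horner_prod => /prodf_neq0; by apply.
have [s /andP[us /eqP ss]] := uniq_seq_exists Finf (size Q).
case: (boolP (all (fun t : F => root Q t%:A) s)) => [Hall | ].
  have := max_poly_roots Q0 (rs := map (fun t : F => t%:A) s).
  rewrite all_map size_map ss ltnn; move/(_ Hall).
  by rewrite (map_inj_uniq (fmorph_inj (in_alg L))) // => /(_ us).
by move/allPn => [t _ Ht]; exists t.
Qed.

Definition ev (L : fieldType) (m : nat) (v : 'rV[L]_m) (x : L) : L :=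
  \sum_(k < m) v 0 k * x ^+ k.

Lemma evE (L : fieldType) m (v : 'rV[L]_m) x : ev v x = (rVpoly v).[x].
Proof. by rewrite horner_poly; apply: eq_bigr => i _; rewrite valK. Qed.

Lemma pol_eq0 (L : fieldType) m (v : 'rV[L]_m) : rVpoly v = 0 -> v = 0.
Proof. by move=> H; rewrite -(rVpolyK v) H linear0. Qed.

Lemma evB (L : fieldType) m (u v : 'rV[L]_m) x : ev (u - v) x = ev u x - ev v x.
Proof. by rewrite /ev -sumrB; apply: eq_bigr => k _; rewrite !mxE mulrBl. Qed.

Lemma evZ (L : fieldType) m (c : L) (v : 'rV[L]_m) x : ev (c *: v) x = c * ev v x.
Proof. by rewrite /ev mulr_sumr; apply: eq_bigr => k _; rewrite !mxE mulrA. Qed.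

Lemma gal_actZ (F : fieldType) (L : splittingFieldType F) (s : gal_of {:L}) m (c : L)
  (v : 'rV[L]_m) : gal_act s (c *: v) = s c *: gal_act s v.
Proof. by apply/rowP => k; rewrite !mxE rmorphM. Qed.

Lemma gal_ev (F : fieldType) (L : splittingFieldType F) (s : gal_of {:L}) m
  (v : 'rV[L]_m) (t : F) : s (ev v t%:A) = ev (gal_act s v) t%:A.
Proof.
rewrite /ev rmorph_sum; apply: eq_bigr => k _.
rewrite rmorphM rmorphXn mxE; congr (_ * _ ^+ _).
exact: rmorph_alg.
Qed.
Theorem lemma4p1 (F : fieldType) (L : splittingFieldType F)
  (Finf : forall s : seq F, exists x : F, x \notin s)
  (Lgal : galois 1%AS {:L})
  (n : nat) (hn : (1 <= n)%N)
  (p : 'I_n.+1 -> 'rV[L]_n.+1)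
  (hp : distinct_points p) (hPst : gal_stable p) :
  exists (q : 'I_n.+1 -> 'rV[L]_n.+1) (f : 'I_n.+1 -> 'I_n.+1),
    [/\ distinct_points q, ~ on_common_hyperplane q, gal_stable q,
        bijective f &
        forall s, s \in ('Gal({:L} / 1%AS))%g -> forall i j,
          proj_eq (gal_act s (p i)) (p j) <-> proj_eq (gal_act s (q (f i))) (q (f j))].
Proof.
case: hp => pnz pinj.
have [t Ht] := exists_nonroot Finf (P := fun i => rVpoly (p i))
  (fun i => contra_neq (@pol_eq0 _ _ _) (pnz i)).
pose N i := ev (p i) t%:A.
have N0 i : N i != 0 by rewrite /N evE.
pose ph i := (N i)^-1 *: p i.
have keyA s i j : proj_eq (gal_act s (p i)) (p j) -> gal_act s (ph i) = ph j.
  case=> c [c0 E].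
  have sN : s (N i) = c * N j by rewrite /N gal_ev E evZ.
  have sNV : s (N i)^-1 = (c * N j)^-1 by rewrite -sN; exact: fmorphV.
  rewrite /ph gal_actZ sNV E scalerA.
  by rewrite invfM mulrAC mulVf // mul1r.
have phinj i j : ph i = ph j -> i = j.
  move=> E; apply: pinj; exists (N i / N j); split.
    by rewrite mulf_neq0 // invr_eq0.
  by rewrite -scalerA -/(ph j) -E /ph scalerA divff // scale1r.
have Hne : forall ij : 'I_n.+1 * 'I_n.+1,
    (if ij.1 == ij.2 then 1 else rVpoly (ph ij.1 - ph ij.2)) != 0.
  move=> [i j] /=; case: (i =P j) => [_|/eqP ij]; first exact: oner_neq0.
  apply: contra_neq ij => /pol_eq0/eqP; rewrite subr_eq0 => /eqP; exact: phinj.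
have [u Hu] := exists_nonroot Finf Hne.
pose al i := ev (ph i) u%:A.
have alinj i j : al i = al j -> i = j.
  move=> E; apply/eqP; apply: contraT => ij.
  have := Hu (i, j); rewrite /= (negbTE ij) -evE evB -/(al i) -/(al j) E subrr.
  by rewrite eqxx.
have keyB s i j : proj_eq (gal_act s (p i)) (p j) -> s (al i) = al j.
  by move=> H; rewrite /al gal_ev (keyA _ _ _ H).
pose q i := \row_(k < n.+1) al i ^+ k.
have keyC (s : gal_of {:L}) i j : s (al i) = al j -> gal_act s (q i) = q j.
  by move=> E; apply/rowP => k; rewrite !mxE -E; exact: rmorphXn.
have qinj i j : proj_eq (q i) (q j) -> i = j.
  case=> c [_ E].
  have E0 := congr1 (fun v : 'rV_n.+1 => v 0 0) E.
  have E1 := congr1 (fun v : 'rV_n.+1 => v 0 (Ordinal (hn : (1 < n.+1)%N))) E.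
  move: E0 E1; rewrite /= !mxE !expr0 !expr1 mulr1 => <-; rewrite mul1r.
  exact: alinj.
exists q, id; split.
- split => // i; apply/eqP => /rowP /(_ 0); rewrite !mxE expr0 => /eqP.
  by rewrite oner_eq0.
- case=> a [a0 H].
  pose P := rVpoly a^T.
  have rootP i : root P (al i).
    have := congr1 (fun v : 'rV_1 => v 0 0) (H i).
    rewrite /= /root -evE /ev !mxE => E; apply/eqP; rewrite -[RHS]E.
    by apply: eq_bigr => k _; rewrite !mxE mulrC.
  have P0 : P = 0.
    apply/eqP; apply: contraT => P0.
    have := max_poly_roots P0 (rs := map al (enum 'I_n.+1)).
    rewrite size_map size_enum_ord (map_inj_uniq alinj) ?enum_uniq //.
    have -> : all (root P) [seq al i | i <- enum 'I_n.+1].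
      by apply/allP => x /mapP[i _ ->].
    move/(_ isT isT); rewrite ltnNge.
    by have -> := size_poly n.+1 (fun k => if insub k is Some i then a^T 0 i else 0).
  move: a0; have := pol_eq0 P0 => /(congr1 trmx); rewrite trmxK => ->.
  by rewrite linear0 eqxx.
- move=> s sG i; have [j Hj] := hPst s sG i; exists j; exists 1; split.
    exact: oner_neq0.
  by rewrite scale1r; apply: keyC; apply: keyB.
- by exists id.
move=> s sG i j; split.
  by move=> H; exists 1; split; [exact: oner_neq0 | rewrite scale1r; apply: keyC; apply: keyB].
move=> H; have [j' Hj'] := hPst s sG i.
have Eq := keyC _ _ _ (keyB _ _ _ Hj').
rewrite Eq in H; by rewrite -(qinj _ _ H).
Qed.
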